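(* Let $n\ge1$. Let $X_{2n,2n}$ be the graph with vertices $x_{i,j}$ ($1\le i,j\le 2n$), where $x_{i,j}x_{i',j'}$ is an edge iff $i'=i+1$ and $j\ge j'$. Let $Y_{2n,2n}$ be the graph with vertices $y_{i,j}$ ($1\le i,j\le 2n$) where $y_{i,j}y_{i',j'}$ is an edge iff (1) $i$ odd, $i'=i+1$, $j\ge j'$; or (2) $i$ even, $i'=i+1$, $j<j'$; or (3) $i$ even, $i'$ odd, $i'\ge i+3$; or (4) $i$ odd, $i'=i-1$, $j=1$. Starting from $X_{2n,2n}$, perform successively the pivots on the edges $x_{2n-1,1}x_{2n,1},\ x_{2n-3,1}x_{2n-2,1},\ \dots,\ x_{1,1}x_{2,1}$ (in this order, i.e.\ $n$ pivots on alternate edges of the bottom row, acting from right to left). The resulting graph is (isomorphic to) $Y_{2n,2n}$.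
   Context: For a graph $G=(V,E)$ and $v\in V$, the local complementation $G*v$ is the graph on $V$ with edge set $E\,\triangle\,\{xy: xv,yv\in E,\ x\neq y\}$ (the subgraph induced on the neighbourhood of $v$ is complemented). For an edge $uv$, the pivot of $G$ on $uv$ is $G*u*v*u$; it is known to be symmetric in $u,v$, and its effect is to complement the adjacencies between the three sets $N(u)\cap N(v)$, $N(u)\setminus N(v)$ and $N(v)\setminus N(u)$. In the grids, $i$ is the column index and $j$ the row index, row $1$ being the bottom row. *)

(* Defs.v *)
From mathcomp Require Import all_boot.
Set Implicit Arguments. Unset Strict Implicit. Unset Printing Implicit Defensive.

(* Simple graphs are symmetric irreflexive boolean relations on a finType. *)

Definition lc (T : finType) (G : rel T) (v : T) : rel T :=
  fun x y => G x y (+) [&& x != y, G x v & G y v].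

Definition pivot (T : finType) (G : rel T) (u v : T) : rel T :=
  lc (lc (lc G u) v) u.

(* Vertices of an m x m grid; the vertex with 1-indexed coordinates (i,j)
   (column i, row j) is the pair of ordinals (i-1, j-1). *)
Definition gvert (m : nat) : finType := ('I_m * 'I_m)%type.

Definition col (m : nat) (p : gvert m) : nat := (val p.1).+1.
Definition row (m : nat) (p : gvert m) : nat := (val p.2).+1.

Definition Xarc (m : nat) (p q : gvert m) : bool :=
  (col q == (col p).+1) && (row q <= row p).
Definition Xgraph (m : nat) : rel (gvert m) := fun p q => Xarc p q || Xarc q p.
Arguments Xgraph : clear implicits.

Definition Yarc (m : nat) (p q : gvert m) : bool :=
  let i := col p in let j := row p in let i' := col q in let j' := row q in
  [|| [&& odd i, i' == i.+1 & j' <= j],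
      [&& ~~ odd i, i' == i.+1 & j < j'],
      [&& ~~ odd i, odd i' & i.+3 <= i'] |
      [&& odd i, i' == i.-1 & j == 1]].
Definition Ygraph (m : nat) : rel (gvert m) := fun p q => Yarc p q || Yarc q p.
Arguments Ygraph : clear implicits.

Definition ovtx (m i j : nat) : option (gvert m) :=
  match (insub i.-1 : option 'I_m), (insub j.-1 : option 'I_m) with
  | Some a, Some b => Some (a, b)
  | _, _ => None
  end.
Arguments ovtx : clear implicits.

(* Pivot on (optional) vertices; does nothing if a vertex does not exist
   (which never happens in the theorem, since n >= 1). *)
Definition opivot (T : finType) (G : rel T) (u v : option T) : rel T :=
  match u, v with
  | Some a, Some b => pivot G a b
  | _, _ => G
  end.

Definition pivoted_X (n : nat) : rel (gvert n.*2) :=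
  foldl (fun G k => opivot G (ovtx (n.*2) (n.*2 - 2 * k).-1 1)
                             (ovtx (n.*2) (n.*2 - 2 * k) 1))
        (Xgraph (n.*2)) (iota 0 n).
Arguments pivoted_X : clear implicits.

Definition isomorphic (T : finType) (G H : rel T) : Prop :=
  exists f : T -> T, bijective f /\ forall x y, G x y = H (f x) (f y).

(* Main.v *)
Require Import Defs.
From mathcomp Require Import all_boot zify.
Set Implicit Arguments. Unset Strict Implicit. Unset Printing Implicit Defensive.

Section Piv.
Variables (T : finType) (G : rel T) (u v : T).
Hypothesis Gsym : forall x y, G x y = G y x.
Hypothesis Girr : forall x, G x x = false.
Hypothesis Guv : G u v.

Lemma pivot_all x y : pivot G u v x y =
 if x == u then (if y == u then false else if y == v then true else G v y)
 else if x == v then (if y == u then true else if y == v then false else G u y)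
 else if y == u then G x v else if y == v then G x u
 else G x y (+) ((G x u && G y v) (+) (G x v && G y u)).
Proof.
have Gvu : G v u by rewrite Gsym.
have nuv : u != v by apply/eqP => E; move: Guv; rewrite E Girr.
rewrite /pivot /lc.
have Gs := Gsym.
have yc : forall y, y = u \/ y = v \/ (y != u /\ y != v).
  by move=> z; case: (eqVneq z u); case: (eqVneq z v); auto.
case: (yc x) => [->|[->|[xu xv]]]; case: (yc y) => [->|[->|[yu yv]]];
  rewrite ?eqxx ?(negbTE nuv) ?(eq_sym v u) ?(negbTE nuv) ?Girr ?Guv ?Gvu //=;
  rewrite ?(negbTE xu) ?(negbTE xv) ?(negbTE yu) ?(negbTE yv) ?(eq_sym u) ?(eq_sym v) ?(negbTE xu) ?(negbTE xv) ?(negbTE yu) ?(negbTE yv) /=;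
  rewrite ?Girr ?Guv ?Gvu /=.
all: try rewrite (Gs u y). all: try rewrite (Gs v y).
all: try (case: (eqVneq x y) => [<-|xy]; rewrite ?Girr /=).
all: by case: (G x u); case: (G x v); try case: (G y u); try case: (G y v); try case: (G x y).
Qed.
End Piv.

Ltac bsplit :=
  match goal with
  | |- context [odd ?t] => let E := fresh "E" in case E: (odd t);
       [have ? : t %% 2 = 1 by rewrite modn2 E | have ? : t %% 2 = 0 by rewrite modn2 E]; clear E
  | |- context [?a <= ?b] => case: (leqP a b) => ?
  | |- context [?a == ?b :> nat] => case: (eqVneq a b) => ?
  end; try (exfalso; lia).

Definition X' (i j i' j' : nat) := ((i' == i.+1) && (j' <= j)) || ((i == i'.+1) && (j <= j')).
Definition Ya (i j i' j' : nat) :=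
  [|| [&& odd i, i' == i.+1 & j' <= j],
      [&& ~~ odd i, i' == i.+1 & j < j'],
      [&& ~~ odd i, odd i' & i.+3 <= i'] |
      [&& odd i, i' == i.-1 & j == 1]].
Definition Y' i j i' j' := Ya i j i' j' || Ya i' j' i j.
Definition H' c i j i' j' := if (i <= c) && (i' <= c) then X' i j i' j' else if (i < c) || (i' < c) then false else Y' i j i' j'.


Ltac bsplit2 :=
  match goal with
  | |- context [odd ?t] => let E := fresh "E" in case E: (odd t) => /=;
       [have ? : t %% 2 = 1 by rewrite modn2 E | have ? : t %% 2 = 0 by rewrite modn2 E]; clear E
  | |- context [?a <= ?b] => case: (leqP a b) => ? /=
  | |- context [?a == ?b :> nat] => case: (eqVneq a b) => ? /=
  end; try (exfalso; lia).

Lemma Nu c i j : c %% 2 = 0 -> 2 <= c -> 1 <= i -> 1 <= j -> ~~ ((i == c) && (j == 1)) ->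
  H' c i j c.-1 1 = (i == c - 2).
Proof. move=> *; rewrite /H' /Y' /Ya /X'. (repeat bsplit2); done. Qed.

Lemma Nv c i j : c %% 2 = 0 -> 2 <= c -> 1 <= i -> 1 <= j -> ~~ ((i == c.-1) && (j == 1)) ->
  H' c i j c 1 = [|| i == c.-1, i == c.+1 | odd i && (c.+3 <= i)].
Proof. move=> *; rewrite /H' /Y' /Ya /X'. (repeat bsplit2); done. Qed.


Ltac bsplit3 :=
  match goal with
  | |- context [?a <= ?b] => case: (leqP a b) => ? /=
  | |- context [?a == ?b :> nat] => case: (eqVneq a b) => ? /=
  end; try (exfalso; lia).

Lemma mainAA d i j i' j' (oi oi' : bool) (ai ai' : nat) : 1 <= i -> 1 <= j -> 1 <= i' -> 1 <= j' ->
  i = 2 * ai + oi -> i' = 2 * ai' + oi' -> 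
  ~~ ((i == (2*d).+1) && (j == 1)) -> ~~ ((i == (2*d).+2) && (j == 1)) ->
  ~~ ((i' == (2*d).+1) && (j' == 1)) -> ~~ ((i' == (2*d).+2) && (j' == 1)) -> i <= 2*d -> i' <= 2*d ->
  let c := (2*d).+2 in
  H' c i j i' j' (+) (((i == 2*d) && [|| i' == c.-1, i' == c.+1 | oi' && (c.+3 <= i')]) (+) ([|| i == c.-1, i == c.+1 | oi && (c.+3 <= i)] && (i' == 2*d)))
  = H' (2*d) i j i' j'.
Proof.
move=> ? ? ? ? ? ? ? ? ? ? ? ? c; rewrite /c /=.
rewrite /H' /Y' /Ya /X'.
have ->: odd i = oi by subst; rewrite oddD oddM; destruct oi, oi'.
have ->: odd i' = oi' by subst; rewrite oddD oddM; destruct oi, oi'.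
(destruct oi, oi'; simpl nat_of_bool in *; (repeat bsplit3)); done.
Qed.

Lemma mainAB d i j i' j' (oi oi' : bool) (ai ai' : nat) : 1 <= i -> 1 <= j -> 1 <= i' -> 1 <= j' ->
  i = 2 * ai + oi -> i' = 2 * ai' + oi' -> 
  ~~ ((i == (2*d).+1) && (j == 1)) -> ~~ ((i == (2*d).+2) && (j == 1)) ->
  ~~ ((i' == (2*d).+1) && (j' == 1)) -> ~~ ((i' == (2*d).+2) && (j' == 1)) -> i <= 2*d -> (2*d < i') && (i' <= (2*d).+2) ->
  let c := (2*d).+2 in
  H' c i j i' j' (+) (((i == 2*d) && [|| i' == c.-1, i' == c.+1 | oi' && (c.+3 <= i')]) (+) ([|| i == c.-1, i == c.+1 | oi && (c.+3 <= i)] && (i' == 2*d)))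
  = H' (2*d) i j i' j'.
Proof.
move=> ? ? ? ? ? ? ? ? ? ? ? ? c; rewrite /c /=.
rewrite /H' /Y' /Ya /X'.
have ->: odd i = oi by subst; rewrite oddD oddM; destruct oi, oi'.
have ->: odd i' = oi' by subst; rewrite oddD oddM; destruct oi, oi'.
(destruct oi, oi'; simpl nat_of_bool in *; (repeat bsplit3)); done.
Qed.

Lemma mainAC d i j i' j' (oi oi' : bool) (ai ai' : nat) : 1 <= i -> 1 <= j -> 1 <= i' -> 1 <= j' ->
  i = 2 * ai + oi -> i' = 2 * ai' + oi' -> 
  ~~ ((i == (2*d).+1) && (j == 1)) -> ~~ ((i == (2*d).+2) && (j == 1)) ->
  ~~ ((i' == (2*d).+1) && (j' == 1)) -> ~~ ((i' == (2*d).+2) && (j' == 1)) -> i <= 2*d -> (2*d).+2 < i' ->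
  let c := (2*d).+2 in
  H' c i j i' j' (+) (((i == 2*d) && [|| i' == c.-1, i' == c.+1 | oi' && (c.+3 <= i')]) (+) ([|| i == c.-1, i == c.+1 | oi && (c.+3 <= i)] && (i' == 2*d)))
  = H' (2*d) i j i' j'.
Proof.
move=> ? ? ? ? ? ? ? ? ? ? ? ? c; rewrite /c /=.
rewrite /H' /Y' /Ya /X'.
have ->: odd i = oi by subst; rewrite oddD oddM; destruct oi, oi'.
have ->: odd i' = oi' by subst; rewrite oddD oddM; destruct oi, oi'.
(destruct oi, oi'; simpl nat_of_bool in *; (repeat bsplit3)); done.
Qed.

Lemma mainBA d i j i' j' (oi oi' : bool) (ai ai' : nat) : 1 <= i -> 1 <= j -> 1 <= i' -> 1 <= j' ->
  i = 2 * ai + oi -> i' = 2 * ai' + oi' -> 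
  ~~ ((i == (2*d).+1) && (j == 1)) -> ~~ ((i == (2*d).+2) && (j == 1)) ->
  ~~ ((i' == (2*d).+1) && (j' == 1)) -> ~~ ((i' == (2*d).+2) && (j' == 1)) -> (2*d < i) && (i <= (2*d).+2) -> i' <= 2*d ->
  let c := (2*d).+2 in
  H' c i j i' j' (+) (((i == 2*d) && [|| i' == c.-1, i' == c.+1 | oi' && (c.+3 <= i')]) (+) ([|| i == c.-1, i == c.+1 | oi && (c.+3 <= i)] && (i' == 2*d)))
  = H' (2*d) i j i' j'.
Proof.
move=> ? ? ? ? ? ? ? ? ? ? ? ? c; rewrite /c /=.
rewrite /H' /Y' /Ya /X'.
have ->: odd i = oi by subst; rewrite oddD oddM; destruct oi, oi'.
have ->: odd i' = oi' by subst; rewrite oddD oddM; destruct oi, oi'.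
(destruct oi, oi'; simpl nat_of_bool in *; (repeat bsplit3)); done.
Qed.

Lemma mainBB d i j i' j' (oi oi' : bool) (ai ai' : nat) : 1 <= i -> 1 <= j -> 1 <= i' -> 1 <= j' ->
  i = 2 * ai + oi -> i' = 2 * ai' + oi' -> 
  ~~ ((i == (2*d).+1) && (j == 1)) -> ~~ ((i == (2*d).+2) && (j == 1)) ->
  ~~ ((i' == (2*d).+1) && (j' == 1)) -> ~~ ((i' == (2*d).+2) && (j' == 1)) -> (2*d < i) && (i <= (2*d).+2) -> (2*d < i') && (i' <= (2*d).+2) ->
  let c := (2*d).+2 in
  H' c i j i' j' (+) (((i == 2*d) && [|| i' == c.-1, i' == c.+1 | oi' && (c.+3 <= i')]) (+) ([|| i == c.-1, i == c.+1 | oi && (c.+3 <= i)] && (i' == 2*d)))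
  = H' (2*d) i j i' j'.
Proof.
move=> ? ? ? ? ? ? ? ? ? ? ? ? c; rewrite /c /=.
rewrite /H' /Y' /Ya /X'.
have ->: odd i = oi by subst; rewrite oddD oddM; destruct oi, oi'.
have ->: odd i' = oi' by subst; rewrite oddD oddM; destruct oi, oi'.
(destruct oi, oi'; simpl nat_of_bool in *; (repeat bsplit3)); done.
Qed.

Lemma mainBC d i j i' j' (oi oi' : bool) (ai ai' : nat) : 1 <= i -> 1 <= j -> 1 <= i' -> 1 <= j' ->
  i = 2 * ai + oi -> i' = 2 * ai' + oi' -> 
  ~~ ((i == (2*d).+1) && (j == 1)) -> ~~ ((i == (2*d).+2) && (j == 1)) ->
  ~~ ((i' == (2*d).+1) && (j' == 1)) -> ~~ ((i' == (2*d).+2) && (j' == 1)) -> (2*d < i) && (i <= (2*d).+2) -> (2*d).+2 < i' ->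
  let c := (2*d).+2 in
  H' c i j i' j' (+) (((i == 2*d) && [|| i' == c.-1, i' == c.+1 | oi' && (c.+3 <= i')]) (+) ([|| i == c.-1, i == c.+1 | oi && (c.+3 <= i)] && (i' == 2*d)))
  = H' (2*d) i j i' j'.
Proof.
move=> ? ? ? ? ? ? ? ? ? ? ? ? c; rewrite /c /=.
rewrite /H' /Y' /Ya /X'.
have ->: odd i = oi by subst; rewrite oddD oddM; destruct oi, oi'.
have ->: odd i' = oi' by subst; rewrite oddD oddM; destruct oi, oi'.
(destruct oi, oi'; simpl nat_of_bool in *; (repeat bsplit3)); done.
Qed.

Lemma mainCA d i j i' j' (oi oi' : bool) (ai ai' : nat) : 1 <= i -> 1 <= j -> 1 <= i' -> 1 <= j' ->
  i = 2 * ai + oi -> i' = 2 * ai' + oi' -> 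
  ~~ ((i == (2*d).+1) && (j == 1)) -> ~~ ((i == (2*d).+2) && (j == 1)) ->
  ~~ ((i' == (2*d).+1) && (j' == 1)) -> ~~ ((i' == (2*d).+2) && (j' == 1)) -> (2*d).+2 < i -> i' <= 2*d ->
  let c := (2*d).+2 in
  H' c i j i' j' (+) (((i == 2*d) && [|| i' == c.-1, i' == c.+1 | oi' && (c.+3 <= i')]) (+) ([|| i == c.-1, i == c.+1 | oi && (c.+3 <= i)] && (i' == 2*d)))
  = H' (2*d) i j i' j'.
Proof.
move=> ? ? ? ? ? ? ? ? ? ? ? ? c; rewrite /c /=.
rewrite /H' /Y' /Ya /X'.
have ->: odd i = oi by subst; rewrite oddD oddM; destruct oi, oi'.
have ->: odd i' = oi' by subst; rewrite oddD oddM; destruct oi, oi'.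
(destruct oi, oi'; simpl nat_of_bool in *; (repeat bsplit3)); done.
Qed.

Lemma mainCB d i j i' j' (oi oi' : bool) (ai ai' : nat) : 1 <= i -> 1 <= j -> 1 <= i' -> 1 <= j' ->
  i = 2 * ai + oi -> i' = 2 * ai' + oi' -> 
  ~~ ((i == (2*d).+1) && (j == 1)) -> ~~ ((i == (2*d).+2) && (j == 1)) ->
  ~~ ((i' == (2*d).+1) && (j' == 1)) -> ~~ ((i' == (2*d).+2) && (j' == 1)) -> (2*d).+2 < i -> (2*d < i') && (i' <= (2*d).+2) ->
  let c := (2*d).+2 in
  H' c i j i' j' (+) (((i == 2*d) && [|| i' == c.-1, i' == c.+1 | oi' && (c.+3 <= i')]) (+) ([|| i == c.-1, i == c.+1 | oi && (c.+3 <= i)] && (i' == 2*d)))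
  = H' (2*d) i j i' j'.
Proof.
move=> ? ? ? ? ? ? ? ? ? ? ? ? c; rewrite /c /=.
rewrite /H' /Y' /Ya /X'.
have ->: odd i = oi by subst; rewrite oddD oddM; destruct oi, oi'.
have ->: odd i' = oi' by subst; rewrite oddD oddM; destruct oi, oi'.
(destruct oi, oi'; simpl nat_of_bool in *; (repeat bsplit3)); done.
Qed.

Lemma mainCC d i j i' j' (oi oi' : bool) (ai ai' : nat) : 1 <= i -> 1 <= j -> 1 <= i' -> 1 <= j' ->
  i = 2 * ai + oi -> i' = 2 * ai' + oi' -> 
  ~~ ((i == (2*d).+1) && (j == 1)) -> ~~ ((i == (2*d).+2) && (j == 1)) ->
  ~~ ((i' == (2*d).+1) && (j' == 1)) -> ~~ ((i' == (2*d).+2) && (j' == 1)) -> (2*d).+2 < i -> (2*d).+2 < i' ->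
  let c := (2*d).+2 in
  H' c i j i' j' (+) (((i == 2*d) && [|| i' == c.-1, i' == c.+1 | oi' && (c.+3 <= i')]) (+) ([|| i == c.-1, i == c.+1 | oi && (c.+3 <= i)] && (i' == 2*d)))
  = H' (2*d) i j i' j'.
Proof.
move=> ? ? ? ? ? ? ? ? ? ? ? ? c; rewrite /c /=.
rewrite /H' /Y' /Ya /X'.
have ->: odd i = oi by subst; rewrite oddD oddM; destruct oi, oi'.
have ->: odd i' = oi' by subst; rewrite oddD oddM; destruct oi, oi'.
(destruct oi, oi'; simpl nat_of_bool in *; (repeat bsplit3)); done.
Qed.

Lemma main_all c i j i' j' : ~~ odd c -> 2 <= c -> 1 <= i -> 1 <= j -> 1 <= i' -> 1 <= j' ->
  ~~ ((i == c.-1) && (j == 1)) -> ~~ ((i == c) && (j == 1)) ->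
  ~~ ((i' == c.-1) && (j' == 1)) -> ~~ ((i' == c) && (j' == 1)) ->
  H' c i j i' j' (+) ((H' c i j c.-1 1 && H' c i' j' c 1) (+) (H' c i j c 1 && H' c i' j' c.-1 1))
  = H' (c-2) i j i' j'.
Proof.
move=> oc c2 i1 j1 i1' j1' hu hv hu' hv'.
have cm : c %% 2 = 0 by rewrite modn2 (negbTE oc).
rewrite (@Nu c i j) // (@Nu c i' j') // (@Nv c i j) // (@Nv c i' j') //.
have [d Ed] : exists d, c = (2 * d).+2 by exists (c./2.-1); lia.
subst c.
have -> : (2 * d).+2 - 2 = 2 * d by lia.
have ei := esym (odd_double_half i). have ei' := esym (odd_double_half i').
rewrite -!mul2n in ei ei'.
have ei2 : i = 2 * i./2 + odd i by lia.
have ei2' : i' = 2 * i'./2 + odd i' by lia.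
have [ra|[rb|rc]] : i <= 2*d \/ ((2*d < i) && (i <= (2*d).+2)) \/ (2*d).+2 < i by lia.
all: have [ra'|[rb'|rc']] : i' <= 2*d \/ ((2*d < i') && (i' <= (2*d).+2)) \/ (2*d).+2 < i' by lia.
- exact: (@mainAA d i j i' j' (odd i) (odd i') _ _ i1 j1 i1' j1' ei2 ei2' hu hv hu' hv' ra ra').
- exact: (@mainAB d i j i' j' (odd i) (odd i') _ _ i1 j1 i1' j1' ei2 ei2' hu hv hu' hv' ra rb').
- exact: (@mainAC d i j i' j' (odd i) (odd i') _ _ i1 j1 i1' j1' ei2 ei2' hu hv hu' hv' ra rc').
- exact: (@mainBA d i j i' j' (odd i) (odd i') _ _ i1 j1 i1' j1' ei2 ei2' hu hv hu' hv' rb ra').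
- exact: (@mainBB d i j i' j' (odd i) (odd i') _ _ i1 j1 i1' j1' ei2 ei2' hu hv hu' hv' rb rb').
- exact: (@mainBC d i j i' j' (odd i) (odd i') _ _ i1 j1 i1' j1' ei2 ei2' hu hv hu' hv' rb rc').
- exact: (@mainCA d i j i' j' (odd i) (odd i') _ _ i1 j1 i1' j1' ei2 ei2' hu hv hu' hv' rc ra').
- exact: (@mainCB d i j i' j' (odd i) (odd i') _ _ i1 j1 i1' j1' ei2 ei2' hu hv hu' hv' rc rb').
- exact: (@mainCC d i j i' j' (odd i) (odd i') _ _ i1 j1 i1' j1' ei2 ei2' hu hv hu' hv' rc rc').
Qed.

Lemma HU c i' j' : c %% 2 = 0 -> 2 <= c -> 1 <= i' -> 1 <= j' ->
  ~~ ((i' == c.-1) && (j' == 1)) -> ~~ ((i' == c) && (j' == 1)) ->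
  H' c c 1 i' j' = H' (c-2) c 1 i' j'.
Proof. move=> *; rewrite /H' /Y' /Ya /X'. (repeat bsplit2); done. Qed.

Lemma HV c i' j' : c %% 2 = 0 -> 2 <= c -> 1 <= i' -> 1 <= j' ->
  ~~ ((i' == c.-1) && (j' == 1)) -> ~~ ((i' == c) && (j' == 1)) ->
  H' c c.-1 1 i' j' = H' (c-2) c.-1 1 i' j'.
Proof. move=> *; rewrite /H' /Y' /Ya /X'. (repeat bsplit2); done. Qed.

Lemma Hsym c i j i' j' : H' c i j i' j' = H' c i' j' i j.
Proof. by rewrite /H' /Y' /X' andbC orbC [(i' < c) || _]orbC [Ya i' _ _ _ || _]orbC. Qed.

Lemma Hirr c i j : H' c i j i j = false.
Proof. rewrite /H' /Y' /Ya /X'. (repeat bsplit2); done. Qed.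

Lemma Huv c : c %% 2 = 0 -> 2 <= c -> H' (c-2) c.-1 1 c 1.
Proof. move=> *; rewrite /H' /Y' /Ya /X'. (repeat bsplit2); done. Qed.

Ltac noif t := lazymatch t with context [if _ then _ else _] => fail | _ => idtac end.
Ltac bsplit4 :=
  match goal with
  | |- context [odd ?t] => noif t; let E := fresh "E" in case E: (odd t) => /=;
       [have ? : t %% 2 = 1 by rewrite modn2 E | have ? : t %% 2 = 0 by rewrite modn2 E]; clear E
  | |- context [?a <= ?b] => noif a; noif b; case: (leqP a b) => ? /=
  | |- context [?a == ?b :> nat] => noif a; noif b; case: (eqVneq a b) => ? /=
  end; try (exfalso; lia).

Section Grid.
Variable m : nat.
Hypothesis em : ~~ odd m.

Definition Hg c : rel (gvert m) := fun p q => H' c (col p) (row p) (col q) (row q).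
Definition sw c (p : gvert m) : gvert m :=
  if (row p == 1) && (c < col p)
  then (insubd p.1 (if odd (col p) then col p else (col p).-2), p.2) else p.

Lemma gv_eq (p q : gvert m) : (p == q) = (col p == col q) && (row p == row q).
Proof. by case: p q => [a b] [a' b']; rewrite /col /row /= xpair_eqE. Qed.

Lemma gvP (p q : gvert m) : col p = col q -> row p = row q -> p = q.
Proof. by move=> e1 e2; apply/eqP; rewrite gv_eq e1 e2 !eqxx. Qed.

Lemma col_bd (p : gvert m) : 1 <= col p <= m.
Proof. by rewrite /col ltn_ord. Qed.
Lemma row_bd (p : gvert m) : 1 <= row p <= m.
Proof. by rewrite /row ltn_ord. Qed.

Lemma row_sw c p : row (sw c p) = row p.
Proof. by rewrite /sw; case: ifP. Qed.

Lemma col_sw c p : col (sw c p) =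
  if (row p == 1) && (c < col p) then (if odd (col p) then (col p).+1 else (col p).-1) else col p.
Proof.
rewrite /sw; case: ifP => // _.
have mm : m %% 2 = 0 by rewrite modn2 (negbTE em).
rewrite {1}/col val_insubd.
have hb := col_bd p.
set a := col p in hb *. have ha : a = (val p.1).+1 by [].
clearbody a.
case E: (odd a); have := modn2 a; rewrite E /= => ma; case: ifP => h; lia.
Qed.

Lemma swK c p : ~~ odd c -> sw c (sw c p) = p.
Proof.
move=> oc; have cm : c %% 2 = 0 by rewrite modn2 (negbTE oc).
apply: gvP; rewrite ?row_sw // !col_sw ?row_sw //.
have := col_bd p; have := row_bd p.
move: (col p) (row p) => a b *.
(repeat bsplit4); first [done | lia].
Qed.

Lemma sw_fix c p : col p <= c -> sw c p = p.
Proof. by move=> h; rewrite /sw ltnNge h andbF. Qed.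

Definition tsw (u v p : gvert m) := if p == u then v else if p == v then u else p.

Lemma sw_step c (u v : gvert m) x : ~~ odd c -> 2 <= c ->
  col u = c.-1 -> row u = 1 -> col v = c -> row v = 1 ->
  sw (c - 2) x = tsw u v (sw c x).
Proof.
move=> oc c2 cu ru cv rv; have cm : c %% 2 = 0 by rewrite modn2 (negbTE oc).
rewrite /tsw !gv_eq !col_sw !row_sw cu ru cv rv.
case: ifP => E1; [|case: ifP => E2]; apply: gvP;
  rewrite ?col_sw ?row_sw ?cu ?ru ?cv ?rv //;
  have := col_bd x; have := row_bd x;
  move: E1; try move: E2; move: (col x) (row x) => a b; (repeat bsplit4); move=> *; first [done | lia].
Qed.
End Grid.

Lemma lc_ext (T : finType) (G1 G2 : rel T) w :
  (forall a b, G1 a b = G2 a b) -> forall a b, lc G1 w a b = lc G2 w a b.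
Proof. by move=> E a b; rewrite /lc !E. Qed.

Lemma pivot_ext (T : finType) (G1 G2 : rel T) u v :
  (forall a b, G1 a b = G2 a b) -> forall a b, pivot G1 u v a b = pivot G2 u v a b.
Proof. by move=> E; apply: lc_ext; apply: lc_ext; apply: lc_ext. Qed.

Lemma lc_comp (T : finType) (G : rel T) (s : T -> T) w : injective s ->
  forall a b, lc (fun x y => G (s x) (s y)) w a b = lc G (s w) (s a) (s b).
Proof. by move=> si a b; rewrite /lc (inj_eq si). Qed.

Lemma pivot_comp (T : finType) (G : rel T) (s : T -> T) u v : injective s ->
  forall a b, pivot (fun x y => G (s x) (s y)) u v a b = pivot G (s u) (s v) (s a) (s b).
Proof.
move=> si a b; rewrite /pivot.
rewrite (lc_ext u (lc_ext v (lc_comp G u si))).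
rewrite (lc_ext u (lc_comp (lc G (s u)) v si)).
by rewrite lc_comp.
Qed.

Lemma H'uv c : 1 <= c -> H' c c.-1 1 c 1.
Proof. move=> *; rewrite /H' /X'. (repeat bsplit2); done. Qed.

Lemma key m c (u v : gvert m) : ~~ odd c -> 2 <= c -> col u = c.-1 -> row u = 1 ->
  col v = c -> row v = 1 ->
  forall x y, pivot (Hg c) u v x y = Hg (c-2) (tsw u v x) (tsw u v y).
Proof.
move=> oc c2 cu ru cv rv x y.
have cm : c %% 2 = 0 by rewrite modn2 (negbTE oc).
have Hs : forall c' (a b : gvert m), Hg c' a b = Hg c' b a by move=> *; rewrite /Hg Hsym.
have Hi : forall c' (a : gvert m), Hg c' a a = false by move=> *; rewrite /Hg Hirr.
have Huv' : Hg c u v by rewrite /Hg cu ru cv rv H'uv //; lia.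
have Huv2 : Hg (c - 2) u v by rewrite /Hg cu ru cv rv Huv.
have vu : (v == u) = false by rewrite gv_eq cu cv; apply/negbTE; rewrite negb_and; apply/orP; left; apply/eqP; lia.
have uv : (u == v) = false by rewrite eq_sym.
have nb : forall a : gvert m, a != u -> a != v ->
   ~~ ((col a == c.-1) && (row a == 1)) /\ ~~ ((col a == c) && (row a == 1)).
  by move=> a; rewrite !gv_eq cu ru cv rv.
rewrite (pivot_all (Hs c) (Hi c) Huv') /tsw.
case: (eqVneq x u) => [_|xu]; case: (eqVneq y u) => [_|yu];
  rewrite ?eqxx ?uv ?vu ?Hi ?Huv2 ?(Hs _ v u) ?Huv2 //.
- case: (eqVneq y v) => [_|yv]; rewrite ?eqxx ?Hi ?(Hs _ v u) ?Huv2 //.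
  have [h1 h2] := nb y yu yv.
  have := col_bd y; have := row_bd y.
  rewrite /Hg cv rv => /andP[? ?] /andP[? ?]; exact: HU.
- case: (eqVneq x v) => [_|xv]; rewrite ?eqxx ?Hi ?(Hs _ v u) ?Huv2 //.
  have [h1 h2] := nb x xu xv.
  have := col_bd x; have := row_bd x.
  rewrite (Hs c x v) (Hs (c-2) x v) /Hg cv rv => /andP[? ?] /andP[? ?]; exact: HU.
- case: (eqVneq x v) => [_|xv]; rewrite ?eqxx;
  case: (eqVneq y v) => [_|yv]; rewrite ?eqxx ?Hi ?(Hs _ v u) ?Huv2 ?vu //.
  + have [h1 h2] := nb y yu yv.
    have := col_bd y; have := row_bd y.
    rewrite /Hg ?cv ?rv ?cu ?ru => /andP[? ?] /andP[? ?]; exact: HV.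
  + have [h1 h2] := nb x xu xv.
    have := col_bd x; have := row_bd x.
    rewrite (Hs c x u) (Hs (c-2) x u) /Hg cu ru => /andP[? ?] /andP[? ?]; exact: HV.
  + have [h1 h2] := nb x xu xv. have [h3 h4] := nb y yu yv.
    have := col_bd x; have := row_bd x; have := col_bd y; have := row_bd y.
    rewrite /Hg ?cv ?rv ?cu ?ru => /andP[? ?] /andP[? ?] /andP[? ?] /andP[? ?].
    by apply: main_all.
Qed.

Lemma ovtxP m i j : 1 <= i <= m -> 1 <= j <= m ->
  exists p, ovtx m i j = Some p /\ col p = i /\ row p = j.
Proof.
move=> /andP[i1 im] /andP[j1 jm]; rewrite /ovtx.
case: insubP => [a _ ea|/negP h]; last by exfalso; apply: h; lia.
case: insubP => [b _ eb|/negP h]; last by exfalso; apply: h; lia.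
by exists (a, b); rewrite /col /row /= ea eb; split => //; split; lia.
Qed.

Theorem lemma12 (n : nat) : 1 <= n -> isomorphic (pivoted_X n) (Ygraph (n.*2)).
Proof.
move=> n1.
set m := n.*2.
have em : ~~ odd m by rewrite /m odd_double.
have mE : m = 2 * n by rewrite /m -mul2n.
pose F := (fun G k => opivot G (ovtx m (m - 2 * k).-1 1) (ovtx m (m - 2 * k) 1)).
have claim : forall k, k <= n -> forall x y,
    foldl F (Xgraph m) (iota 0 k) x y = Hg (m - 2 * k) (sw (m - 2 * k) x) (sw (m - 2 * k) y).
  elim=> [|k IH] kn x y.
    rewrite muln0 subn0 /= !sw_fix ?(proj2 (andP (col_bd _))) //.
    by rewrite /Hg /H' !(proj2 (andP (col_bd _))).
  have kn' : k <= n by lia.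
  set c := m - 2 * k.
  have oc : ~~ odd c by rewrite /c oddB ?oddM /= ?(negbTE em) //; lia.
  have c2 : 2 <= c by rewrite /c; lia.
  have [u [eu [cu ru]]] := @ovtxP m c.-1 1 ltac:(apply/andP; split; lia) ltac:(apply/andP; split; lia).
  have [v [ev [cv rv]]] := @ovtxP m c 1 ltac:(apply/andP; split; lia) ltac:(apply/andP; split; lia).
  rewrite -addn1 iotaD foldl_cat /= {1}/F -/c eu ev /=.
  rewrite (pivot_ext u v (IH kn')) -/c.
  have si : injective (sw c) := can_inj (fun p => @swK m em c p oc).
  have fu : sw c u = u by apply: sw_fix; rewrite cu; lia.
  have fv : sw c v = v by apply: sw_fix; rewrite cv; lia.
  rewrite (pivot_comp (Hg c) u v si) fu fv.
  rewrite (key oc c2 cu ru cv rv) -(@sw_step m em c u v x oc c2 cu ru cv rv) -(@sw_step m em c u v y oc c2 cu ru cv rv).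
  by have -> : c - 2 = m - 2 * (k + 1) by rewrite /c; lia.
exists (sw 0); split.
  by apply: inv_bij => p; apply: swK.
move=> x y; rewrite /pivoted_X -/m -/F claim // -mE subnn.
have h0 : forall p : gvert m, (col p <= 0) = false by move=> p; have := col_bd p; lia.
by rewrite /Hg /H' !h0.
Qed.
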